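(* Let $\mathcal{N}=\mathcal{N}_s\cup\mathcal{N}_b$ be a finite set of prosumers, partitioned into disjoint sets of sellers $\mathcal{N}_s$ and buyers $\mathcal{N}_b$. Each seller $n\in\mathcal{N}_s$ has a surplus energy $E_{n,\text{sur}}\ge 0$ and each buyer $m\in\mathcal{N}_b$ has a deficit energy $E_{m,\text{def}}\ge 0$. Let $0\le p_{s,g}<p_{b,g}$ be the grid's selling (feed-in) price and buying price per unit of energy. For a coalition $\mathcal{S}\subseteq\mathcal{N}$ put $$z(\mathcal{S})=\sum_{n\in\mathcal{S}\cap\mathcal{N}_s}E_{n,\text{sur}}-\sum_{m\in\mathcal{S}\cap\mathcal{N}_b}E_{m,\text{def}},\qquad \nu(\mathcal{S})=p_{s,g}\max\bigl(0,z(\mathcal{S})\bigr)-p_{b,g}\max\bigl(0,-z(\mathcal{S})\bigr).$$ Then $\nu$ is superadditive: for any two disjoint subsets $\mathcal{N}_a,\mathcal{N}_c\subseteq\mathcal{N}$, $$\nu(\mathcal{N}_a\cup\mathcal{N}_c)\ge\nu(\mathcal{N}_a)+\nu(\mathcal{N}_c).$$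
   Context: This is the value function of a canonical coalition game with transferable utility $\Gamma=\{\mathcal{N},\nu\}$ modelling peer-to-peer energy trading: within a coalition, sellers' surplus first covers buyers' deficits, any remaining surplus is sold to the grid at price $p_{s,g}$, and any remaining deficit is bought from the grid at price $p_{b,g}$. Here $E_{n,\text{sur}}=E_{n,\text{pv}}-\min(E_{n,d},E_{n,\text{pv}})$ and $E_{n,\text{def}}=E_{n,d}-\min(E_{n,d},E_{n,\text{pv}})$, where $E_{n,\text{pv}}$ is the prosumer's solar generation and $E_{n,d}$ its demand. *)

(* Defs.v *)
From mathcomp Require Import all_boot all_order all_algebra.
Set Implicit Arguments. Unset Strict Implicit. Unset Printing Implicit Defensive.
Import Order.TTheory GRing.Theory Num.Theory.
Local Open Scope ring_scope.

Definition net_energy (R : realFieldType) (T : finType) (Ns Nb : {set T})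
  (Esur Edef : T -> R) (S : {set T}) : R :=
  \sum_(n in S :&: Ns) Esur n - \sum_(m in S :&: Nb) Edef m.

Definition coal_value (R : realFieldType) (T : finType) (Ns Nb : {set T})
  (Esur Edef : T -> R) (psg pbg : R) (S : {set T}) : R :=
  let z := net_energy Ns Nb Esur Edef S in
  psg * Num.max 0 z - pbg * Num.max 0 (- z).

(* Main.v *)
Require Import Defs.
From mathcomp Require Import all_boot all_order all_algebra.
From mathcomp Require Import lra.
Import Order.TTheory GRing.Theory Num.Theory.
Local Open Scope ring_scope.

Lemma f_super (R : realFieldType) (psg pbg a c : R) :
  0 <= psg -> psg < pbg ->
  psg * Num.max 0 a - pbg * Num.max 0 (- a) + (psg * Num.max 0 c - pbg * Num.max 0 (- c))
  <= psg * Num.max 0 (a + c) - pbg * Num.max 0 (- (a + c)).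
Proof.
move=> h1 h2.
have M : forall x : R, (0 <= x /\ Num.max 0 x = x) \/ (x < 0 /\ Num.max 0 x = 0).
  move=> x; have [hx|hx] := leP 0 x; [left; split=>//; exact: max_r|right; split=>//; apply: max_l; exact: ltW].
have [[? ->]|[? ->]] := M a; have [[? ->]|[? ->]] := M c;
have [[? ->]|[? ->]] := M (a + c); have [[? ->]|[? ->]] := M (- a);
have [[? ->]|[? ->]] := M (- c); have [[? ->]|[? ->]] := M (- (a + c)); nra.
Qed.

Lemma net_add (R : realFieldType) (T : finType) (Ns Nb : {set T})
  (Esur Edef : T -> R) (Na Nc : {set T}) : [disjoint Na & Nc] ->
  net_energy Ns Nb Esur Edef (Na :|: Nc) =
  net_energy Ns Nb Esur Edef Na + net_energy Ns Nb Esur Edef Nc.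
Proof.
move=> d; rewrite /net_energy !setIUl.
have dI : forall X, [disjoint Na :&: X & Nc :&: X].
  move=> X; apply: disjointWl (subsetIl _ _) _; rewrite disjoint_sym.
  by apply: disjointWl (subsetIl _ _) _; rewrite disjoint_sym.
have E : forall X (F : T -> R), \sum_(i in (Na :&: X) :|: (Nc :&: X)) F i =
    \sum_(i in Na :&: X) F i + \sum_(i in Nc :&: X) F i.
  move=> X F; rewrite -bigU //; apply: eq_bigl => i; by rewrite !inE.
by rewrite !E opprD addrACA.
Qed.

Theorem theorem1 (R : realFieldType) (T : finType) (Ns Nb : {set T})
  (Esur Edef : T -> R) (psg pbg : R)
  (hpart : Ns :|: Nb = [set: T]) (hdisj : [disjoint Ns & Nb])
  (hsur : forall n, n \in Ns -> 0 <= Esur n)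
  (hdef : forall m, m \in Nb -> 0 <= Edef m)
  (hps : 0 <= psg) (hpsb : psg < pbg)
  (Na Nc : {set T}) (hNaNc : [disjoint Na & Nc]) :
  coal_value Ns Nb Esur Edef psg pbg (Na :|: Nc) >=
  coal_value Ns Nb Esur Edef psg pbg Na + coal_value Ns Nb Esur Edef psg pbg Nc.
Proof.
rewrite /coal_value net_add //; exact: f_super.
Qed.
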